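(* The $(1+1)$-type unbiased black-box complexity of the $\mathrm{DLB}$ problem is $O(n^2)$: there exists a $(1+1)$-type unary unbiased black-box algorithm whose expected runtime on $\mathrm{DLB}:\{0,1\}^n\to\mathbb{R}$ is $O(n^2)$.
   Context: Let $n$ be an even positive integer. For $x\in\{0,1\}^n$ consider the blocks $(x_{2\ell+1},x_{2\ell+2})$, $\ell=0,\dots,\frac n2-1$. If $x\neq(1,\dots,1)$, let $m$ be the smallest $\ell$ with $x_{2\ell+1}\neq 1$ or $x_{2\ell+2}\neq 1$, and define $\mathrm{DLB}(x)=2m+1$ if $x_{2m+1}+x_{2m+2}=0$ and $\mathrm{DLB}(x)=2m$ if $x_{2m+1}+x_{2m+2}=1$; set $\mathrm{DLB}(1,\dots,1)=n$. A unary unbiased variation operator $V$ assigns to each $x\in\{0,1\}^n$ a probability distribution $V(x)$ on $\{0,1\}^n$ such that for all $x,y,z$, $\Pr[y=V(x)]=\Pr[y\oplus z=V(x\oplus z)]$, and for all permutations $\sigma$ of $[1..n]$, $\Pr[y=V(x)]=\Pr[\sigma(y)=V(\sigma(x))]$, where $\sigma(x)=(x_{\sigma(1)},\dots,x_{\sigma(n)})$. A $(1+1)$-type unbiased black-box algorithm keeps a single current search point, initially uniformly random; in each iteration it produces one new search point by applying a unary unbiased variation operator to the current point, evaluates it, and decides whether to replace the current point by the new one; all choices (operator and acceptance) depend only on the fitness values observed so far. The runtime is the number of fitness evaluations until (and including) the first evaluation of an optimum; the complexity is the infimum of the expected runtime over all such algorithms. *)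

(* Defs.v *)
From HB Require Import structures.
From mathcomp Require Import all_boot all_order all_algebra all_fingroup.
From mathcomp Require Import all_classical all_reals all_analysis.
Set Implicit Arguments. Unset Strict Implicit. Unset Printing Implicit Defensive.
Import Order.TTheory GRing.Theory Num.Theory.
Local Open Scope ring_scope.

Definition bits (n : nat) := {ffun 'I_n -> bool}.

(* k-th bit (0-based), false if out of range *)
Definition bit (n : nat) (x : bits n) (k : nat) : bool :=
  oapp x false (insub k : option 'I_n).

Definition bxor (n : nat) (x z : bits n) : bits n := [ffun i => x i (+) z i].

Definition bperm (n : nat) (s : {perm 'I_n}) (x : bits n) : bits n :=
  [ffun i => x (s i)].

(* DLB, translated to 0-based indices: block l is (x_{2l}, x_{2l+1}). *)
Definition DLB (n : nat) (x : bits n) : nat :=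
  if [forall i, x i] then n
  else
    let m := find (fun l => ~~ (bit x l.*2 && bit x l.*2.+1)) (iota 0 n./2) in
    if ~~ bit x m.*2 && ~~ bit x m.*2.+1 then m.*2.+1 else m.*2.

(* A unary operator V: V x y = Pr[y = V(x)]. *)
Definition unary_unbiased (R : realType) (n : nat) (V : bits n -> bits n -> R) : Prop :=
  [/\ (forall x y, 0 <= V x y),
      (forall x, \sum_(y : bits n) V x y = 1),
      (forall x y z, V x y = V (bxor x z) (bxor y z)) &
      (forall x y (s : {perm 'I_n}), V x y = V (bperm s x) (bperm s y))].

(* A (1+1)-type unbiased black-box algorithm: the operator used in the next
   iteration and the acceptance decision are functions of the sequence of
   fitness values observed so far (oldest first).  [op h] is the operator used
   when the observed fitness history is h; [accept h'] decides, with h' the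
   history including the new offspring's fitness (last entry), whether the
   offspring replaces the current point. *)
Record alg11 (R : realType) (n : nat) := Alg11 {
  op : seq R -> bits n -> bits n -> R;
  accept : seq R -> bool;
  op_unbiased : forall h, unary_unbiased (op h)
}.

Definition is_opt (R : realType) (n : nat) (f : bits n -> R) (y : bits n) : bool :=
  [forall z, f z <= f y].

(* Finitely supported sub-probability distribution over
   (current point, fitness history) restricted to runs that have not yet
   evaluated an optimum; [run_mass A f t] lists weighted states after the
   (t+1)-th evaluation. *)
Fixpoint run_states (R : realType) (n : nat) (A : alg11 R n) (f : bits n -> R)
    (t : nat) : seq (R * (bits n * seq R)) :=
  match t with
  | 0 => [seq ((2%:R ^- n : R), (x, [:: f x])) | x <- enum {: bits n} & ~~ is_opt f x]
  | t'.+1 =>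
      flatten [seq
        (let: (w, (x, h)) := s in
         [seq (let h' := rcons h (f y) in
               (w * op A h x y, (if accept A h' then y else x, h')))
         | y <- enum {: bits n} & ~~ is_opt f y])
      | s <- run_states A f t']
  end.

(* Pr[T > t+1], T = number of evaluations up to and including the first
   evaluation of an optimum *)
Definition prob_not_found (R : realType) (n : nat) (A : alg11 R n) (f : bits n -> R)
    (t : nat) : R :=
  \sum_(s <- run_states A f t) s.1.

(* E[T] = sum_{t >= 0} Pr[T > t] = 1 + sum_{t >= 0} Pr[T > t+1]  (in \bar R) *)
Definition expected_runtime (R : realType) (n : nat) (A : alg11 R n) (f : bits n -> R)
    : \bar R :=
  (1%:E + \sum_(t <oo) (prob_not_found A f t)%:E)%E.

(* Main.v *)
Require Import Defs.
From HB Require Import structures.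
From mathcomp Require Import all_boot all_order all_algebra all_fingroup.
From mathcomp Require Import all_classical all_reals all_analysis.
From mathcomp Require Import zify.
From mathcomp Require Import lra.
Set Implicit Arguments. Unset Strict Implicit. Unset Printing Implicit Defensive.
Import Order.TTheory GRing.Theory Num.Theory.
Local Open Scope ring_scope.

Definition flip n (x : bits n) (i : 'I_n) : bits n :=
  [ffun j => if j == i then ~~ x j else x j].

Lemma bit_ord n (x : bits n) (i : 'I_n) : bit x i = x i.
Proof. by rewrite /bit valK. Qed.

Lemma bit_out n (x : bits n) k : (n <= k)%N -> bit x k = false.
Proof. by move=> h; rewrite /bit insubN // -leqNgt. Qed.

Lemma bit_flip n (x : bits n) i k :
  bit (flip x i) k = if k == val i then ~~ bit x k else bit x k.
Proof.
rewrite /bit; case: insubP => [u _ <-|hk] /=.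
  by rewrite ffunE val_eqE.
have -> : (k == val i) = false by apply/eqP => e; move: hk; rewrite e ltn_ord.
done.
Qed.

Lemma find_iota_eq (P : pred nat) m k : (m < k)%N -> P m ->
  (forall l, (l < m)%N -> ~~ P l) -> find P (iota 0 k) = m.
Proof.
move=> mk Pm before.
rewrite -(subnKC (ltnW mk)) iotaD add0n.
case E: (k - m)%N => [|r]; first by lia.
rewrite find_cat /=.
have -> : has P (iota 0 m) = false.
  apply/negbTE/hasPn => l; rewrite mem_iota add0n => /andP[_]; exact: before.
by rewrite Pm size_iota addn0.
Qed.

Lemma find_iota_ge (P : pred nat) j k : (j <= k)%N ->
  (forall l, (l < j)%N -> ~~ P l) -> (j <= find P (iota 0 k))%N.
Proof.
move=> jk before; rewrite leqNgt; apply/negP => lt.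
have hs : (find P (iota 0 k) < size (iota 0 k))%N by rewrite size_iota; lia.
move: (hs); rewrite -has_find => hh.
have := nth_find 0 hh; rewrite nth_iota ?add0n; last by rewrite size_iota in hs.
by move: (before _ lt) => /negbTE ->.
Qed.

Definition blk n (x : bits n) l := bit x l.*2 && bit x l.*2.+1.

Lemma forall_bit n (x : bits n) : [forall i, x i] -> forall k, (k < n)%N -> bit x k.
Proof.
move=> /forallP h k hk; have := bit_ord x (Ordinal hk) => /= ->; exact: h.
Qed.

Lemma all_blk n (x : bits n) : ~~ odd n -> (forall l, (l < n./2)%N -> blk x l) ->
  [forall i, x i].
Proof.
move=> ev h; apply/forallP => i; rewrite -bit_ord.
have e := odd_double_half n; have ei := odd_double_half i.
have hl : (i./2 < n./2)%N.
  have := ltn_ord i; move: e ei; rewrite (negbTE ev) /= add0n; case: (odd i); rewrite /= -!muln2; lia.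
move: (h _ hl); rewrite /blk => /andP[h1 h2].
by case oi: (odd i) ei => /= ei; rewrite -ei ?add1n ?add0n.
Qed.

Lemma even_half n : ~~ odd n -> n./2.*2 = n.
Proof. by move=> ev; have := odd_double_half n; rewrite (negbTE ev) add0n. Qed.

Lemma DLB_char n (x : bits n) m : ~~ odd n -> (m < n./2)%N ->
  (forall l, (l < m)%N -> blk x l) -> ~~ blk x m ->
  DLB x = if ~~ bit x m.*2 && ~~ bit x m.*2.+1 then m.*2.+1 else m.*2.
Proof.
move=> ev mn before nb; rewrite /DLB.
have e := even_half ev.
have -> : [forall i, x i] = false.
  apply/negbTE/negP => /forall_bit hb; move: nb; rewrite /blk !hb //; rewrite -e -!muln2; lia.
rewrite /= (@find_iota_eq _ m) //.
by move=> l /before; rewrite /blk => ->.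
Qed.

Lemma DLB_ge n (x : bits n) k : (k <= n./2)%N ->
  (forall l, (l < k)%N -> blk x l) -> (k.*2 <= DLB x)%N.
Proof.
move=> kn before; rewrite /DLB.
have e := odd_double_half n.
case: ifP => _; first by move: e; rewrite -!muln2; lia.
have h := @find_iota_ge (fun l => ~~ (bit x l.*2 && bit x l.*2.+1)) k n./2 kn.
have {}h := h (fun l hl => negbT (negbF (before l hl))).
set m := find _ _ in h *.
case: ifP => _; rewrite -!muln2; lia.
Qed.

Lemma DLB_le n (x : bits n) : ~~ odd n -> (DLB x <= n)%N.
Proof.
move=> ev; have e := even_half ev; rewrite /DLB.
case: ifP => // Hall.
set P := (fun l => ~~ (bit x l.*2 && bit x l.*2.+1)).
have : has P (iota 0 n./2).
  apply/negPn/negP => /hasPn hn.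
  have : [forall i, x i].
    apply: all_blk => // l hl; have := hn l; rewrite mem_iota add0n hl /= => /(_ isT).
    by rewrite /P negbK.
  by rewrite Hall.
rewrite has_find size_iota => hm.
case: ifP => _; move: hm; rewrite -e -!muln2; lia.
Qed.

Lemma exists_m n (x : bits n) : ~~ odd n -> ~~ [forall i, x i] ->
  exists m, [/\ (m < n./2)%N, (forall l, (l < m)%N -> blk x l) & ~~ blk x m].
Proof.
move=> ev Hall.
set P := (fun l => ~~ (bit x l.*2 && bit x l.*2.+1)).
have hh : has P (iota 0 n./2).
  apply/negPn/negP => /hasPn hn.
  have : [forall i, x i].
    apply: all_blk => // l hl; have := hn l; rewrite mem_iota add0n hl /= => /(_ isT).
    by rewrite /P negbK.
  by rewrite (negbTE Hall).
have hm := hh; rewrite has_find size_iota in hm.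
exists (find P (iota 0 n./2)); split => //.
  move=> l hl; have := before_find 0 hl; rewrite nth_iota ?add0n; last lia.
  by rewrite /P => /negbFE.
have := nth_find 0 hh; rewrite nth_iota ?add0n //.
Qed.

Lemma flip_up n (x : bits n) m : ~~ odd n -> (m < n./2)%N ->
  (forall l, (l < m)%N -> blk x l) -> ~~ blk x m ->
  (bit x m.*2 || bit x m.*2.+1) -> exists i, (m.+1.*2 <= DLB (flip x i))%N.
Proof.
move=> ev mn before nb one; have e := even_half ev.
set j := if bit x m.*2 then m.*2.+1 else m.*2.
have jn : (j < n)%N by rewrite /j; case: ifP => _; rewrite -e -!muln2; lia.
exists (Ordinal jn); apply: DLB_ge => //.
move=> l hl; rewrite /blk !bit_flip /=.
case: (ltnP l m) => hlm.
  have := before l hlm; rewrite /blk.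
  have -> : (l.*2 == j) = false by apply/eqP; rewrite /j; case: ifP => _; rewrite -!muln2; lia.
  have -> : (l.*2.+1 == j) = false by apply/eqP; rewrite /j; case: ifP => _; rewrite -!muln2; lia.
  done.
have -> : l = m by lia.
have ne1 : (m.*2 == m.*2.+1) = false by rewrite -!muln2; lia.
have ne2 : (m.*2.+1 == m.*2) = false by rewrite -!muln2; lia.
move: nb one; rewrite /blk /j.
by case: (bit x m.*2); case: (bit x m.*2.+1); rewrite /= ?eqxx ?ne1 ?ne2.
Qed.

Lemma flip_down n (x : bits n) m : ~~ odd n -> (m < n./2)%N ->
  (forall l, (l < m)%N -> blk x l) ->
  ~~ bit x m.*2 -> ~~ bit x m.*2.+1 -> exists i, DLB (flip x i) = m.*2.
Proof.
move=> ev mn before b1 b2; have e := even_half ev.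
have jn : (m.*2 < n)%N by rewrite -e -!muln2; lia.
have ne2 : (m.*2.+1 == m.*2) = false by rewrite -!muln2; lia.
exists (Ordinal jn); rewrite (@DLB_char _ _ m) //=.
- by rewrite !bit_flip /= eqxx ne2 (negbTE b1) (negbTE b2).
- move=> l hl; rewrite /blk !bit_flip /=.
  have -> : (l.*2 == m.*2) = false by rewrite -!muln2; lia.
  have -> : (l.*2.+1 == m.*2) = false by rewrite -!muln2; lia.
  exact: before.
- by rewrite /blk !bit_flip /= eqxx ne2 (negbTE b1) (negbTE b2).
Qed.

Definition rule (c b : nat) : bool := (c.+2 <= b)%N || (odd c && (b.+1 == c)).
Definition gv (n v : nat) : nat := (n + 2 * odd v - v)%N.

Lemma gv_dec n v v' : (v <= n)%N -> (v' <= n)%N -> rule v v' -> (gv n v' < gv n v)%N.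
Proof.
rewrite /rule /gv => hv hv'.
have e := odd_double_half v; have e' := odd_double_half v'.
move: e e'; case: (odd v); case: (odd v'); rewrite /= -!muln2; lia.
Qed.

Lemma gv_le n v : (gv n v <= n + 2)%N.
Proof. rewrite /gv; case: (odd v) => /=; lia. Qed.

Lemma drift_exists n (x : bits n) : ~~ odd n -> ~~ [forall i, x i] ->
  exists i, rule (DLB x) (DLB (flip x i)).
Proof.
move=> ev Hall; have [m [mn before nb]] := exists_m ev Hall.
rewrite (DLB_char ev mn before nb).
case: ifP => [/andP[b1 b2] | hb].
  have [i hi] := flip_down ev mn before b1 b2; exists i.
  by rewrite hi /rule /= odd_double eqxx orbT.
have [i hi] : exists i, (m.+1.*2 <= DLB (flip x i))%N.
  apply: flip_up => //; move: hb; by case: (bit x m.*2); case: (bit x m.*2.+1).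
by exists i; rewrite /rule; move: hi; rewrite -!muln2 => ->.
Qed.

Definition Vop (R : realType) n (x y : bits n) : R :=
  n%:R^-1 * \sum_(i < n) ((flip x i == y)%:R).

Lemma sumV (R : realType) n (x : bits n) (F : bits n -> R) :
  \sum_y @Vop R n x y * F y = n%:R^-1 * \sum_i F (flip x i).
Proof.
rewrite /Vop; under eq_bigr do rewrite -mulrA.
rewrite -mulr_sumr; congr (_ * _).
under eq_bigr do rewrite mulr_suml.
rewrite exchange_big /=; apply: eq_bigr => i _.
rewrite (bigD1 (flip x i)) //= eqxx mul1r big1 ?addr0 //.
by move=> y; rewrite eq_sym => /negbTE ->; rewrite mul0r.
Qed.

Lemma flip_xor n (x z : bits n) i : flip (bxor x z) i = bxor (flip x i) z.
Proof. by apply/ffunP => j; rewrite !ffunE; case: (j == i); rewrite ?ffunE //; case: (x j); case: (z j). Qed.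

Lemma bxorK n (z : bits n) : involutive (fun x : bits n => bxor x z).
Proof. by move=> x; apply/ffunP => j; rewrite !ffunE -addbA addbb addbF. Qed.

Lemma flip_perm n (s : {perm 'I_n}) (x : bits n) i :
  flip (bperm s x) i = bperm s (flip x (s i)).
Proof. by apply/ffunP => j; rewrite !ffunE (inj_eq perm_inj). Qed.

Lemma bperm_inj n (s : {perm 'I_n}) : injective (bperm s).
Proof.
move=> x y e; apply/ffunP => j.
have := congr1 (fun f : bits n => f (s^-1 j)%g) e; by rewrite !ffunE permKV.
Qed.

Lemma Vop_unbiased (R : realType) n : (0 < n)%N -> unary_unbiased (@Vop R n).
Proof.
move=> hn; split.
- move=> x y; rewrite /Vop mulr_ge0 ?invr_ge0 ?ler0n //; apply: sumr_ge0 => i _; exact: ler0n.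
- move=> x; have := @sumV R n x (fun _ => 1); under eq_bigr do rewrite mulr1.
  move=> ->; rewrite sumr_const card_ord -[_ *+ n]mulr_natr mul1r mulVf //.
  by rewrite pnatr_eq0 -lt0n.
- move=> x y z; rewrite /Vop; congr (_ * _); apply: eq_bigr => i _.
  by rewrite flip_xor (inj_eq (can_inj (bxorK z))).
- move=> x y s; rewrite /Vop; congr (_ * _).
  rewrite (reindex_inj (@perm_inj _ s)) /=; apply: eq_bigr => i _.
  by rewrite flip_perm (inj_eq (@bperm_inj _ s)).
Qed.

Definition ruleR (R : realType) (c b : R) : bool := rule (Num.truncn c) (Num.truncn b).
Definition stepR (R : realType) (c b : R) : R := if ruleR c b then b else c.
Definition curh (R : realType) (h : seq R) : R :=
  if h is a :: t then foldl (@stepR R) a t else 0.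
Definition acc (R : realType) (h : seq R) : bool :=
  ruleR (curh (take (size h).-1 h)) (last 0 h).

Definition alg (R : realType) n (hn : (0 < n)%N) : alg11 R n :=
  @Alg11 R n (fun _ => @Vop R n) (@acc R) (fun _ => @Vop_unbiased R n hn).

Lemma curh_rcons (R : realType) (h : seq R) b : h != [::] ->
  curh (rcons h b) = stepR (curh h) b.
Proof. by case: h => // a t _ /=; rewrite foldl_rcons. Qed.

Lemma acc_rcons (R : realType) (h : seq R) b :
  acc (rcons h b) = ruleR (curh h) b.
Proof.
by rewrite /acc size_rcons /= -cats1 take_size_cat // last_cat.
Qed.

Lemma ruleR_nat (R : realType) (a b : nat) : @ruleR R a%:R b%:R = rule a b.
Proof. by rewrite /ruleR !natrK. Qed.

Definition pot (R : realType) n (x : bits n) : R := (n * gv n (DLB x))%:R.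

Lemma pot_ge0 (R : realType) n (x : bits n) : 0 <= @pot R n x.
Proof. exact: ler0n. Qed.

Lemma pot_le (R : realType) n (x : bits n) : @pot R n x <= (n * (n + 2))%:R.
Proof. by rewrite /pot ler_nat leq_mul2l gv_le orbT. Qed.

Lemma drift (R : realType) n (x : bits n) : (0 < n)%N -> ~~ odd n -> ~~ [forall i, x i] ->
  \sum_y @Vop R n x y * pot R (if rule (DLB x) (DLB y) then y else x) <= pot R x - 1.
Proof.
move=> hn ev Hall; rewrite sumV.
set G := fun i => pot R (if rule (DLB x) (DLB (flip x i)) then flip x i else x).
have H1 : forall i, G i <= pot R x.
  move=> i; rewrite /G; case: ifP => // hr.
  rewrite /pot ler_nat leq_mul2l; apply/orP; right; apply: ltnW.
  by apply: gv_dec => //; apply: DLB_le.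
have [i0 hi0] := drift_exists ev Hall.
have H2 : n%:R <= pot R x - G i0.
  rewrite /G hi0 /pot lerBrDr -natrD ler_nat.
  have := gv_dec (DLB_le x ev) (DLB_le (flip x i0) ev) hi0.
  by move=> h; rewrite -mulnS leq_mul2l h orbT.
have H3 : n%:R <= \sum_i (pot R x - G i).
  rewrite (bigD1 i0) //=; apply: (le_trans H2); rewrite lerDl.
  by apply: sumr_ge0 => i _; rewrite subr_ge0.
move: H3; rewrite sumrB sumr_const card_ord -mulr_natr => H3.
have -> : \sum_i pot R (if rule (DLB x) (DLB (flip x i)) then flip x i else x) = \sum_i G i by [].
rewrite ler_pdivrMl; last by rewrite mul1r ltr0n.
set S := \sum_i G i in H3 *; set P := pot R x in H3 *.
nra.
Qed.

Lemma nonopt_notall (R : realType) n (x : bits n) : ~~ odd n ->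
  ~~ is_opt (fun x => (DLB x)%:R : R) x -> ~~ [forall i, x i].
Proof.
move=> ev; apply: contra => hall; apply/forallP => z.
have -> : DLB x = n by rewrite /DLB hall.
by rewrite ler_nat DLB_le.
Qed.

Definition Inv (R : realType) n (s : R * (bits n * seq R)) :=
  [/\ 0 <= s.1, ~~ is_opt (fun x => (DLB x)%:R : R) s.2.1, s.2.2 != [::] &
      curh s.2.2 = (DLB s.2.1)%:R].

Lemma inv_run (R : realType) n (hn : (0 < n)%N) t s :
  s \in run_states (alg R hn) (fun x => (DLB x)%:R) t -> Inv s.
Proof.
elim: t s => [|t IH] s /=.
  case/mapP => x; rewrite mem_filter => /andP[nx _] ->.
  by split => //=; rewrite ?exprn_ge0 ?invr_ge0 ?exprn_ge0 ?ler0n.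
case/flatten_mapP => [[w [x h]]] /IH [/= w0 nx hne hc].
case/mapP => y; rewrite mem_filter => /andP[ny _] -> /=.
rewrite acc_rcons hc; split => /=.
- by apply: mulr_ge0 => //; case: (@Vop_unbiased R n hn) => + _ _ _; apply.
- by case: ifP.
- by rewrite -size_eq0 size_rcons.
- by rewrite curh_rcons // hc /stepR; case: ifP.
Qed.

Definition Phi (R : realType) n (hn : (0 < n)%N) t :=
  \sum_(s <- run_states (alg R hn) (fun x => (DLB x)%:R) t) s.1 * pot R s.2.1.

Lemma Phi_step (R : realType) n (hn : (0 < n)%N) t : ~~ odd n ->
  Phi R hn t.+1 + prob_not_found (alg R hn) (fun x => (DLB x)%:R) t <= Phi R hn t.
Proof.
move=> ev; rewrite /Phi /prob_not_found /= big_flatten /= big_map -big_split /=.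
rewrite [X in _ <= X]big_seq [X in X <= _]big_seq.
apply: ler_sum => -[w [x h]] /inv_run [/= w0 nx hne hc].
rewrite big_map big_filter /=.
under eq_bigr do rewrite acc_rcons hc ruleR_nat.
apply: (@le_trans _ _ (w * \sum_y @Vop R n x y * pot R (if rule (DLB x) (DLB y) then y else x) + w)).
  rewrite lerD2r big_mkcond /= big_enum /= mulr_sumr; apply: ler_sum => y _.
  case: ifP => _; first by rewrite mulrA.
  rewrite mulr_ge0 // mulr_ge0 ?pot_ge0 //.
  by case: (@Vop_unbiased R n hn) => + _ _ _; apply.
have := drift R hn ev (nonopt_notall ev nx).
move=> hd; have := ler_wpM2l w0 hd; nra.
Qed.

Lemma Phi_ge0 (R : realType) n (hn : (0 < n)%N) t : 0 <= Phi R hn t.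
Proof.
rewrite /Phi big_seq; apply: sumr_ge0 => s /inv_run [w0 _ _ _].
by rewrite mulr_ge0 ?pot_ge0.
Qed.

Lemma Phi0_le (R : realType) n (hn : (0 < n)%N) : Phi R hn 0 <= (n * (n + 2))%:R.
Proof.
rewrite /Phi /= big_map big_filter.
apply: (@le_trans _ _ (\sum_(x <- enum {: bits n}) (2%:R ^- n * (n * (n + 2))%:R))).
  rewrite big_mkcond /=; apply: ler_sum => x _; case: ifP => _.
    by rewrite ler_wpM2l ?pot_le // invr_ge0 exprn_ge0.
  by rewrite mulr_ge0 ?invr_ge0 ?exprn_ge0.
rewrite big_enum /= sumr_const.
have -> : #|[pred x in {: bits n}]| = (2 ^ n)%N.
  by rewrite cardE -cardT card_ffun card_bool card_ord.
have e : (2%:R : R) ^+ n != 0 by rewrite expf_neq0 // pnatr_eq0.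
by rewrite -[_ *+ (2 ^ n)%N]mulr_natr natrX mulrAC mulVf // mul1r.
Qed.

Lemma tele (R : realType) n (hn : (0 < n)%N) N : ~~ odd n ->
  \sum_(t < N) prob_not_found (alg R hn) (fun x => (DLB x)%:R) t + Phi R hn N <= Phi R hn 0.
Proof.
move=> ev; elim: N => [|N IH]; first by rewrite big_ord0 add0r.
rewrite big_ord_recr /=; apply: le_trans IH.
have := @Phi_step R n hn N ev; lra.
Qed.

Lemma mass_ge0 (R : realType) n (hn : (0 < n)%N) t :
  0 <= prob_not_found (alg R hn) (fun x => (DLB x)%:R) t.
Proof.
rewrite /prob_not_found big_seq; apply: sumr_ge0 => s /inv_run [w0 _ _ _] //.
Qed.

Theorem theorem11 (R : realType) :
  exists (C : R) (n0 : nat), 0 < C /\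
    forall n : nat, (n0 <= n)%N -> ~~ odd n -> (0 < n)%N ->
      exists A : alg11 R n,
        (expected_runtime A (fun x => (DLB x)%:R) <= (C * (n ^ 2)%:R)%:E)%E.
Proof.
exists 4, 0%N; split; first lra.
move=> n _ ev hn; exists (alg R hn).
rewrite /expected_runtime.
have hs : (\sum_(t <oo) (prob_not_found (alg R hn) (fun x => (DLB x)%:R) t)%:E
           <= ((n * (n + 2))%:R)%:E)%E.
  apply: lime_le.
    by apply: is_cvg_nneseries => k _ _; rewrite lee_fin mass_ge0.
  apply: nearW => N; rewrite sumEFin lee_fin big_mkord.
  apply: le_trans (Phi0_le R hn).
  have := @tele R n hn N ev; have := @Phi_ge0 R n hn N; lra.
apply: le_trans (leeD2l 1%E hs) _; rewrite -EFinD lee_fin.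
rewrite !natrM natrD.
have : 1 <= n%:R :> R by rewrite ler1n.
nra.
Qed.
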